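(* Let $N\ge1$, $1\le S\le N$, $L$ a band-width vector, $\dot W$ an $L$-admissible matrix, $W_\varepsilon=\mathrm{Id}+\varepsilon\dot W$, $\beta\in\Gamma$ and $k\in\mathbb Z$. Then there exists $\gamma_k>0$ such that for every $0<\varepsilon<\gamma_k$ the matrix $P_{\varepsilon,\beta}:=D_{k,\beta,L}W_\varepsilon$ has $N$ distinct eigenvalues.
   Context: A band-width vector is $L=(L_1,\dots,L_S)$ of positive integers with $\sum_sL_s=N$; $N_0=0$, $N_s=N_{s-1}+L_s$, $B_s=\{j:N_{s-1}<j\le N_s\}$. For $\beta\in\mathbb R^S$, $D_{k,\beta,L}$ is the $N\times N$ diagonal matrix whose $j$-th diagonal entry is $e^{-2\pi ik\beta_s}$ for $j\in B_s$. $\dot W$ is $L$-admissible if it is real symmetric and (1) $\dot W_{ij}\ge0$ for $i\ne j$, $\sum_j\dot W_{ij}=0$ for all $i$; (2) $\dot W$ has $N$ distinct eigenvalues; (3) for each $s$, $\hat W_s=(\dot W_{jk})_{j,k\in B_s}$ has $L_s$ distinct eigenvalues. $\Gamma=\{\beta\in\mathbb R^S: e^{-2\pi ik\beta_{s_1}}\neq e^{-2\pi ik\beta_{s_2}}\text{ for all }k\in\mathbb Z\setminus\{0\}\text{ and all }s_1\neq s_2\}$. *)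

(* Defs.v *)
From HB Require Import structures.
From mathcomp Require Import all_boot all_order all_algebra.
From mathcomp Require Import all_classical all_reals.
From mathcomp Require Import trigo.
From mathcomp Require Import complex.
Set Implicit Arguments. Unset Strict Implicit. Unset Printing Implicit Defensive.
Import Order.TTheory GRing.Theory Num.Theory.
Local Open Scope ring_scope.

(* Conventions: indices are 0-based.  A band-width vector is L : 'I_S -> nat,
   block s (0-based) is B_s = { j : Nstart L s <= j < Nstart L s + L s }. *)

Definition Nstart (S : nat) (L : 'I_S -> nat) (s : 'I_S) : nat :=
  (\sum_(t < S | (t < s)%N) L t)%N.

Definition in_block (S : nat) (L : 'I_S -> nat) (s : 'I_S) (j : nat) : bool :=
  (Nstart L s <= j < Nstart L s + L s)%N.

Definition bandwidth_vector (N S : nat) (L : 'I_S -> nat) : Prop :=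
  (forall s, (0 < L s)%N) /\ (\sum_(s < S) L s)%N = N.

Definition phase (R : realType) (k : int) (b : R) : complex R :=
  let th := 2 * pi * (k%:~R) * b in Complex (cos th) (- sin th).

(* D_{k,beta,L}: diagonal entry j is e^{-2 pi i k beta_s} for j in B_s
   (the blocks partition {0..N-1}, so exactly one s contributes) *)
Definition Dmat (R : realType) (N S : nat) (L : 'I_S -> nat) (k : int)
  (beta : 'I_S -> R) : 'M[complex R]_N :=
  \matrix_(i < N, j < N)
    if i == j then \sum_(s < S | in_block L s i) phase k (beta s) else 0.

(* entry of a matrix addressed by natural numbers (0 outside the range) *)
Definition mx_nat (R : nzRingType) (N : nat) (W : 'M[R]_N) (i j : nat) : R :=
  match insub i, insub j with
  | Some i', Some j' => W i' j'
  | _, _ => 0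
  end.

Definition diag_block (R : nzRingType) (N S : nat) (L : 'I_S -> nat)
  (W : 'M[R]_N) (s : 'I_S) : 'M[R]_(L s) :=
  \matrix_(a < L s, b < L s) mx_nat W (Nstart L s + a) (Nstart L s + b).

Definition has_n_distinct_eigenvalues (F : fieldType) (n : nat) (M : 'M[F]_n) : Prop :=
  exists ev : seq F, [/\ size ev = n, uniq ev & all (eigenvalue M) ev].

Definition admissible (R : realType) (N S : nat) (L : 'I_S -> nat) (Wd : 'M[R]_N) : Prop :=
  [/\ Wd^T = Wd,
      (forall i j : 'I_N, i != j -> 0 <= Wd i j),
      (forall i : 'I_N, \sum_(j < N) Wd i j = 0),
      has_n_distinct_eigenvalues Wd &
      (forall s : 'I_S, has_n_distinct_eigenvalues (diag_block L Wd s))].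

Definition Gamma_set (R : realType) (S : nat) (beta : 'I_S -> R) : Prop :=
  forall (k : int) (s1 s2 : 'I_S), k != 0 -> s1 != s2 ->
    phase k (beta s1) != phase k (beta s2).

Definition Pmat (R : realType) (N S : nat) (L : 'I_S -> nat) (k : int)
  (beta : 'I_S -> R) (Wd : 'M[R]_N) (eps : R) : 'M[complex R]_N :=
  Dmat N L k beta *m map_mx (fun x : R => (x%:C)%C) (1%:M + eps *: Wd).

(* Main.v *)
Require Import Defs.
From HB Require Import structures.
From mathcomp Require Import all_boot all_order all_algebra.
From mathcomp Require Import all_classical all_reals.
From mathcomp Require Import trigo.
From mathcomp Require Import complex.
From mathcomp Require Import ring lra.
Import Order.TTheory GRing.Theory Num.Theory.
Local Open Scope ring_scope.
Set Implicit Arguments. Unset Strict Implicit.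

Section NC.
Variable R : realType.
Local Notation C := (complex R).
Definition nc (x : C) : R := Normc.normc x.
Lemma nc_ge0 x : 0 <= nc x.
Proof. by case: x => a b; rewrite /nc /= sqrtr_ge0. Qed.
Lemma ncM x y : nc (x*y) = nc x * nc y.
Proof. exact: Normc.normcM. Qed.
Lemma ncD x y : nc (x+y) <= nc x + nc y.
Proof. exact: (@le_normcD R x y). Qed.
Lemma ncN x : nc (-x) = nc x.
Proof. exact: (@normcN R x). Qed.
Lemma nc_eq0 x : (nc x == 0) = (x == 0).
Proof. apply/eqP/eqP => [/Normc.eq0_normc //|->]; exact: Normc.normc0. Qed.
Lemma nc0 : nc 0 = 0.
Proof. exact: Normc.normc0. Qed.
Lemma nc1 : nc 1 = 1.
Proof. exact: Normc.normc1. Qed.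
Lemma ncR (a : R) : nc (a%:C)%C = `|a|.
Proof. by rewrite /nc /= expr0n /= addr0 sqrtr_sqr. Qed.
Lemma ncB x y : nc (x - y) = nc (y - x).
Proof. by rewrite -ncN opprB. Qed.
Lemma ncX x n : nc (x ^+ n) = nc x ^+ n.
Proof. by elim: n => [|n IH]; rewrite ?expr0 ?nc1 // !exprS ncM IH. Qed.
Lemma nc_sum (I : Type) (r : seq I) (P : pred I) (F : I -> C) :
  nc (\sum_(i <- r | P i) F i) <= \sum_(i <- r | P i) nc (F i).
Proof.
elim/big_rec2: _ => [|i y x _ IH]; first by rewrite nc0.
apply: le_trans (ncD _ _) _; exact: lerD.
Qed.
Lemma nc_prod (I : Type) (r : seq I) (P : pred I) (F : I -> C) :
  nc (\prod_(i <- r | P i) F i) = \prod_(i <- r | P i) nc (F i).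
Proof. elim/big_rec2: _ => [|i y x _ IH]; first exact: nc1. by rewrite ncM IH. Qed.
Lemma nc_tri x y z : nc (x - z) <= nc (x - y) + nc (y - z).
Proof. by rewrite -[x - z](subrKA y); apply: le_trans (ncD _ _) _; rewrite addrC. Qed.
Lemma nc_lb x y : nc x - nc y <= nc (x - y).
Proof. rewrite lerBlDr; have h := ncD (x - y) y; by rewrite subrK in h. Qed.
Lemma nc_gt0 x : x != 0 -> 0 < nc x.
Proof. by move=> x0; rewrite lt_def nc_ge0 nc_eq0 x0. Qed.
End NC.

Section RL.
Variable R : realType.
Local Notation C := (complex R).

Lemma prod_bound (x y : C) (r : R) (rs : seq C) :
  (forall z, z \in rs -> r <= nc (z - x)) -> nc (y - x) <= r ->
  \prod_(z <- rs) nc (y - z) <= 2 ^+ (size rs) * \prod_(z <- rs) nc (x - z).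
Proof.
move=> Hz Hy; elim: rs Hz => [|a rs IH] Hz; first by rewrite !big_nil expr0 mulr1.
rewrite !big_cons /= exprS mulrACA.
apply: ler_pM.
- exact: nc_ge0.
- by apply: prodr_ge0 => i _; exact: nc_ge0.
- have h1 := nc_tri y x a.
  have h2 : r <= nc (x - a) by rewrite ncB; apply: Hz; rewrite mem_head.
  apply: le_trans h1 _; rewrite mulr_natl mulr2n; apply: lerD => //.
  exact: le_trans Hy h2.
- by apply: IH => z zin; apply: Hz; rewrite in_cons zin orbT.
Qed.

Lemma root_loc (p : {poly C}) (x y : C) (r : R) :
  nc (y - x) <= r -> 2 ^+ (size p) * nc p.[x] < nc p.[y] ->
  exists z, root p z /\ nc (z - x) < r.
Proof.
move=> Hy Hlt.
have [rs Hp] := closed_field_poly_normal p.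
have [/hasP [z zin lt]|hn] := boolP (has (fun z => nc (z - x) < r) rs).
  exists z; split => //.
  have : root (\prod_(a <- rs) ('X - a%:P)) z by rewrite root_prod_XsubC.
  by rewrite Hp !rootE hornerZ => /eqP ->; rewrite mulr0.
exfalso.
have Hz : forall z, z \in rs -> r <= nc (z - x).
  move=> z zin; rewrite leNgt; apply/negP => lt; move/hasP: hn; apply; by exists z.
have [p0|pn0] := eqVneq p 0.
  by move: Hlt; rewrite p0 !horner0 nc0 mulr0 ltxx.
have Hs : size p = (size rs).+1.
  by rewrite Hp size_scale ?size_prod_XsubC // lead_coef_eq0.
have ev v : p.[v] = lead_coef p * \prod_(z <- rs) (v - z).
  by rewrite {1}Hp hornerZ horner_prod; congr (_ * _); apply: eq_bigr => i _; rewrite hornerXsubC.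
move: Hlt; rewrite !ev !ncM !nc_prod Hs exprS => Hlt.
have Hb := prod_bound (y:=y) Hz Hy.
have h : nc (lead_coef p) * \prod_(z <- rs) nc (y - z) <= 2 ^+ (size rs) * (nc (lead_coef p) * \prod_(z <- rs) nc (x - z)).
  rewrite mulrCA; apply: ler_wpM2l; [exact: nc_ge0|exact: Hb].
have A0 : 0 <= nc (lead_coef p) * \prod_(z <- rs) nc (x - z).
  by apply: mulr_ge0; [exact: nc_ge0| apply: prodr_ge0 => i _; exact: nc_ge0].
have E0 : 0 <= 2 ^+ size rs :> R by apply: exprn_ge0.
move: (lt_le_trans Hlt h); set A := _ * \prod_(_ <- _) _; set B := 2 ^+ _.
move=> H; nra.
Qed.
End RL.

Section CL.
Variable R : realType.
Local Notation C := (complex R).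

Lemma horner_bound (q : {poly C}) (c : C) : nc c <= 1 ->
  nc q.[c] <= \sum_(i < size q) nc q`_i.
Proof.
move=> hc; rewrite horner_coef; apply: le_trans (nc_sum _ _ _) _.
apply: ler_sum => i _; rewrite ncM ncX.
rewrite -[X in _ <= X]mulr1; apply: ler_wpM2l; first exact: nc_ge0.
by apply: exprn_ile1 => //; exact: nc_ge0.
Qed.

Lemma det_affine_bound n (A B : 'M[C]_n) : exists K : R, 0 <= K /\
  forall e : R, 0 <= e <= 1 -> nc (\det (A + (e%:C)%C *: B) - \det A) <= K * e.
Proof.
pose Q := \det (map_mx polyC A + 'X *: map_mx polyC B).
have evQ c : Q.[c] = \det (A + c *: B).
  rewrite /Q -horner_evalE -det_map_mx; congr (\det _); apply/matrixP => i j.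
  rewrite !mxE /=; rewrite /horner_eval /=. by rewrite hornerD hornerM hornerX !hornerC.
have Q0 : Q.[0] = \det A by rewrite evQ scale0r addr0.
have : root (Q - (Q.[0])%:P) 0 by rewrite rootE hornerD hornerN hornerC subrr.
case/factor_theorem => q Hq.
exists (\sum_(i < size q) nc q`_i); split.
  by apply: sumr_ge0 => i _; exact: nc_ge0.
move=> e /andP[e0 e1].
have -> : \det (A + (e%:C)%C *: B) - \det A = q.[(e%:C)%C] * (e%:C)%C.
  have := congr1 (fun p => p.[(e%:C)%C]) Hq => /=.
  by rewrite hornerD hornerN hornerC hornerM hornerXsubC subr0 Q0 evQ.
rewrite ncM ncR ger0_norm //; apply: ler_wpM2r => //.
by apply: horner_bound; rewrite ncR ger0_norm.
Qed.
End CL.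

Section Blocks.
Variables (N S : nat) (L : 'I_S -> nat).
Hypothesis hbw : bandwidth_vector N L.

Definition ps (m : nat) : nat := (\sum_(t < S | (t < m)%N) L t)%N.

Lemma ps_mono m m' : (m <= m')%N -> (ps m <= ps m')%N.
Proof.
move=> le; rewrite /ps [X in (X <= _)%N]big_mkcond [X in (_ <= X)%N]big_mkcond /=.
apply: leq_sum => t _; case: ifP => // h; by rewrite (leq_trans h le).
Qed.

Lemma ps_S m : (S <= m)%N -> ps m = N.
Proof.
move=> le; case: hbw => _ <-; rewrite /ps; apply: eq_bigl => t.
by rewrite (leq_trans (ltn_ord t) le).
Qed.

Lemma ps_step (s : 'I_S) : ps s.+1 = (Nstart L s + L s)%N.
Proof.
rewrite /ps /Nstart (bigD1 s) //= addnC; congr (_ + _)%N.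
apply: eq_bigl => t; have [lt|gt|eq] := ltngtP t s.
- apply/andP; split; first by rewrite ltnS ltnW.
  by apply/eqP => e; rewrite e ltnn in lt.
- by rewrite ltnS leqNgt gt.
- by rewrite (val_inj eq) eqxx andbF.
Qed.

Lemma Nstart_ps (s : 'I_S) : Nstart L s = ps s. Proof. by []. Qed.

Lemma block_end (s : 'I_S) : (Nstart L s + L s <= N)%N.
Proof. by rewrite -ps_step -(ps_S (leqnn S)); apply: ps_mono. Qed.

Lemma ps0 : ps 0 = 0%N.
Proof. by rewrite /ps big_pred0. Qed.

Lemma block_exists (i : nat) : (i < N)%N -> exists s : 'I_S, in_block L s i.
Proof.
move=> iN.
have S0 : (0 < S)%N.
  rewrite lt0n; apply/negP => /eqP S0.
  by move: iN; rewrite -(ps_S (m:=0)) ?ps0 ?S0.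
have ex : exists m, (i < ps m.+1)%N by exists S; rewrite ps_S.
case: (ex_minnP ex) => m Pm Hmin.
have mS : (m < S)%N.
  have := Hmin S.-1; rewrite ps_S ?prednK // => /(_ iN) h.
  by rewrite (leq_ltn_trans h) // prednK ?ltnSn.
exists (Ordinal mS); rewrite /in_block /= -ps_step Pm andbT.
case: m Pm Hmin mS => [|m'] Pm Hmin mS; first by rewrite Nstart_ps ps0.
rewrite Nstart_ps leqNgt; apply/negP => h.
by have := Hmin m' h; rewrite ltnn.
Qed.

Lemma block_uniq (s s' : 'I_S) (i : nat) :
  in_block L s i -> in_block L s' i -> s = s'.
Proof.
rewrite /in_block => /andP[a1 a2] /andP[b1 b2].
have [lt|gt|eq] := ltngtP s s'; last exact: val_inj.
- have := ps_mono lt; rewrite ps_step -!Nstart_ps => h.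
  by have := leq_trans h b1; rewrite leqNgt a2.
- have := ps_mono gt; rewrite ps_step -!Nstart_ps => h.
  by have := leq_trans h a1; rewrite leqNgt b2.
Qed.

Variable s0 : 'I_S.
Definition blk (i : 'I_N) : 'I_S := odflt s0 [pick s | in_block L s i].

Lemma blkP (i : 'I_N) : in_block L (blk i) i.
Proof.
rewrite /blk; case: pickP => [s //|H].
by have [s hs] := block_exists (ltn_ord i); move: (H s); rewrite hs.
Qed.

Lemma blkE (i : 'I_N) (s : 'I_S) : (blk i == s) = in_block L s i.
Proof.
apply/eqP/idP => [<-|h]; first exact: blkP.
by apply: block_uniq (blkP i) h.
Qed.

Lemma emb_proof (s : 'I_S) (a : 'I_(L s)) : (Nstart L s + a < N)%N.
Proof. by apply: leq_trans (block_end s); rewrite ltn_add2l. Qed.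

Definition emb (s : 'I_S) (a : 'I_(L s)) : 'I_N := Ordinal (emb_proof a).

Lemma blk_emb (s : 'I_S) (a : 'I_(L s)) : blk (emb a) = s.
Proof. by apply/eqP; rewrite blkE /in_block /= leq_addr ltn_add2l ltn_ord. Qed.

Lemma emb_inj (s : 'I_S) : injective (@emb s).
Proof. by move=> a b /(congr1 val) /= /addnI /val_inj. Qed.

Lemma Lpos (s : 'I_S) : (0 < L s)%N.
Proof. by case: hbw. Qed.

Definition unemb (s : 'I_S) (i : 'I_N) : 'I_(L s) :=
  insubd (Ordinal (Lpos s)) (i - Nstart L s)%N.

Lemma unembK (s : 'I_S) (i : 'I_N) : blk i = s -> emb (unemb s i) = i.
Proof.
move/eqP; rewrite blkE /in_block => /andP[h1 h2]; apply: val_inj => /=.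
rewrite val_insubd ltn_subLR // h2 subnKC //.
Qed.

Lemma embK (s : 'I_S) (a : 'I_(L s)) : unemb s (emb a) = a.
Proof. by apply: val_inj; rewrite /= val_insubd /= addKn ltn_ord. Qed.

Lemma sum_blk (R : nmodType) (s : 'I_S) (G : 'I_N -> R) :
  \sum_(i | blk i == s) G i = \sum_(a < L s) G (emb a).
Proof.
rewrite (reindex_onto (@emb s) (unemb s)); last by move=> i /eqP; exact: unembK.
by apply: eq_bigl => a; rewrite blk_emb embK !eqxx.
Qed.

End Blocks.

Section Evn.
Variable R : realType.
Definition evn (P : R -> Prop) := exists g : R, 0 < g /\ forall e, 0 < e -> e < g -> P e.

Lemma evn_and (P Q : R -> Prop) : evn P -> evn Q -> evn (fun e => P e /\ Q e).
Proof.
move=> [g1 [g1p H1]] [g2 [g2p H2]]; exists (Num.min g1 g2); split.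
  by rewrite lt_min g1p g2p.
move=> e e0; rewrite lt_min => /andP[a b]; split; [exact: H1|exact: H2].
Qed.

Lemma evn_mono (P Q : R -> Prop) : (forall e, P e -> Q e) -> evn P -> evn Q.
Proof. by move=> PQ [g [gp H]]; exists g; split => // e e0 eg; apply/PQ/H. Qed.

Lemma evn_seq (T : eqType) (l : seq T) (P : T -> R -> Prop) :
  (forall x, x \in l -> evn (P x)) -> evn (fun e => forall x, x \in l -> P x e).
Proof.
elim: l => [|a l IH] H; first by exists 1; split => //.
have := evn_and (H a (mem_head _ _)) (IH (fun x xl => H x (@mem_behead _ (a :: l) x xl))).
apply: evn_mono => e [h1 h2] x; rewrite in_cons => /orP[/eqP->//|]; exact: h2.
Qed.
End Evn.


Section Arith.
Variable R : realType.
Lemma ar_lb (a t2 c K2e : R) : a - t2 <= c -> c <= K2e -> a - K2e <= t2.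
Proof. move=> h1 h2; lra. Qed.
Lemma ar_main (X t1 K1 K2 e a t2 : R) : X * t1 <= X * (K1 * e) ->
  e * (K2 + X * K1 + 1) < a -> a - K2 * e <= t2 -> 0 < e -> X * t1 < t2.
Proof. move=> h1 h2 h3 h4; nra. Qed.
Lemma ar_fin (X t1 t2 G1 G2 : R) : X * t1 < t2 -> 0 < G1 * G2 ->
  X * (G1 * t1 * G2) < G1 * t2 * G2.
Proof. move=> h1 h2; nra. Qed.
Lemma ar_same (a e m r n1 n2 : R) : a * (e * m) <= n1 + n2 -> n1 < e * r * a ->
  n2 < e * r * a -> 2 * r < m -> 0 < e -> 0 < a -> False.
Proof.
move=> h1 h2 h3 h4 h5 h6.
have h7 : (e * a) * (2 * r) < (e * a) * m by rewrite ltr_pM2l // mulr_gt0.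
lra.
Qed.
Lemma ar_cross (c n1 n2 x y : R) : c <= n1 + n2 -> n1 < x -> n2 < y -> x + y <= c -> False.
Proof. move=> *; lra. Qed.
Lemma ar_den (K1 K2 X : R) : 0 <= K1 -> 0 <= K2 -> 0 < X -> 0 < K2 + X * K1 + 1.
Proof. move=> *; nra. Qed.
End Arith.
Section Mat.
Variables (R : realType) (N S : nat) (L : 'I_S -> nat) (Wd : 'M[R]_N)
  (beta : 'I_S -> R) (k : int).
Hypothesis hbw : bandwidth_vector N L.
Variable s0 : 'I_S.
Local Notation C := (complex R).
Local Notation f := (real_complex R).
Local Notation blk := (blk L s0).

Definition dd (s : 'I_S) : C := phase k (beta s).
Definition d (i : 'I_N) : C := dd (blk i).
Definition drow : 'rV[C]_N := \row_i d i.

Lemma phase_neq0 (b : R) : phase k b != 0.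
Proof.
rewrite /phase; apply/negP => /eqP [c0 s0'].
have := cos2Dsin2 (2 * pi * k%:~R * b); rewrite c0 -[sin _]opprK s0' oppr0.
by rewrite expr0n /= addr0 => /eqP; rewrite eq_sym oner_eq0.
Qed.

Lemma dd_neq0 s : dd s != 0. Proof. exact: phase_neq0. Qed.
Lemma d_neq0 i : d i != 0. Proof. exact: dd_neq0. Qed.

Lemma Dmat_E : Dmat N L k beta = diag_mx drow.
Proof.
apply/matrixP => i j; rewrite !mxE; case: (eqVneq i j) => [e|ne]; last by rewrite mulr0n.
rewrite mulr1n (bigD1 (blk i)) ?blkP //= big1 ?addr0 // => s /andP[h ne].
by move: ne; rewrite eq_sym blkE // h.
Qed.

Lemma Pmat_entry e i j : Pmat L k beta Wd e i j =
  d i * (((i == j)%:R + f e * f (Wd i j))).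
Proof.
rewrite /Pmat Dmat_E mul_diag_mx !mxE /=.
by rewrite rmorphD rmorphM /= rmorphMn rmorph1.
Qed.

Definition Amat (s : 'I_S) (z : C) : 'M[C]_N := \matrix_(i, j)
  if blk j == s then z *+ (i == j) - f (Wd i j) else (dd s / d j - 1) *+ (i == j).
Definition Bmat (s : 'I_S) (z : C) : 'M[C]_N := \matrix_(i, j)
  if blk j == s then 0 else (dd s * z / d j) *+ (i == j) - f (Wd i j).
Definition vrow (s : 'I_S) (e : R) : 'rV[C]_N := \row_j if blk j == s then f e else 1.

Lemma factorP s e z :
  (dd s * (1 + f e * z))%:M - Pmat L k beta Wd e =
  diag_mx drow *m (Amat s z + f e *: Bmat s z) *m diag_mx (vrow s e).
Proof.
apply/matrixP => i j; rewrite mul_mx_diag mul_diag_mx [LHS]mxE [X in _ + X]mxE Pmat_entry !mxE.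
have dj := d_neq0 j.
case: (eqVneq i j) => [->|ne]; case: ifP => hb; rewrite ?mulr1n ?mulr0n.
- rewrite /d (eqP hb); ring.
- rewrite /d; field; exact: dd_neq0.
- ring.
- ring.
Qed.


Lemma char_eval n (A : 'M[C]_n) a : (char_poly A).[a] = \det (a%:M - A).
Proof.
rewrite /char_poly -horner_evalE -det_map_mx; congr (\det _); apply/matrixP => i j.
rewrite !mxE /=; rewrite /horner_eval /=.
by rewrite hornerD hornerN hornerMn hornerX hornerC.
Qed.

Lemma p_eval s e z : (char_poly (Pmat L k beta Wd e)).[dd s * (1 + f e * z)] =
  (\prod_i d i) * \det (Amat s z + f e *: Bmat s z) * \prod_i vrow s e 0 i.
Proof.
rewrite char_eval factorP !det_mulmx !det_diag; congr (_ * _ * _).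
by apply: eq_bigr => i _; rewrite mxE.
Qed.

Local Notation emb := (emb hbw).
Local Notation unemb := (unemb hbw).

Lemma mul_supp s (v : 'rV[C]_N) (M : 'M[C]_N) j :
  (forall i, blk i != s -> v 0 i = 0) ->
  (v *m M) 0 j = \sum_(a < L s) v 0 (emb a) * M (emb a) j.
Proof.
move=> H; rewrite mxE (bigID (fun i => blk i == s)) /= [X in _ + X]big1 ?addr0.
  exact: (sum_blk hbw s0 s (fun i => v 0 i * M i j)).
by move=> i /H ->; rewrite mul0r.
Qed.

Lemma mx_natE s (a b : 'I_(L s)) : mx_nat Wd (Nstart L s + a) (Nstart L s + b) = Wd (emb a) (emb b).
Proof.
rewrite /mx_nat insubT ?insubT /=; try exact: (emb_proof hbw); try reflexivity.
all: by move=> h0 h1; congr (Wd _ _); apply: val_inj.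
Qed.

Lemma f_eq0 (x : R) : (f x == 0) = (x == 0).
Proof. exact: fmorph_eq0. Qed.

Lemma detA_eig s (mu : R) : eigenvalue (diag_block L Wd s) mu ->
  \det (Amat s (f mu)) = 0.
Proof.
case/eigenvalueP => u Hu nz.
pose v : 'rV[C]_N := \row_i if blk i == s then f (u 0 (unemb s i)) else 0.
have vs : forall i, blk i != s -> v 0 i = 0 by move=> i /negbTE h; rewrite mxE h.
have ve : forall a, v 0 (emb a) = f (u 0 a) by move=> a; rewrite mxE (blk_emb hbw s0) eqxx (embK hbw).
apply/eqP/det0P; exists v.
  apply: contraNneq nz => v0; apply/eqP/rowP => b; rewrite mxE.
  have := congr1 (fun M : 'rV[C]_N => M 0 (emb b)) v0; rewrite ve mxE => /eqP.
  by rewrite f_eq0 => /eqP.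
apply/rowP => j; rewrite (mul_supp _ _ vs) mxE.
case: (eqVneq (blk j) s) => hj.
  rewrite -(unembK hbw hj); set b := unemb s j.
  have Hu0 : u *m (mu%:M - diag_block L Wd s) = 0 by rewrite mulmxBr mul_mx_scalar Hu subrr.
  have := congr1 (fun M : 'rV[R]_(L s) => f (M 0 b)) Hu0; rewrite mxE rmorph_sum mxE rmorph0 => h; rewrite -[X in _ = X]h.
  apply: eq_bigr => a _; rewrite ve !mxE (blk_emb hbw s0) eqxx (inj_eq (@emb_inj _ _ _ hbw _)).
  by rewrite mx_natE rmorphM rmorphB rmorphMn.
apply: big1 => a _; rewrite !mxE (negbTE hj).
have -> : (emb a == j) = false.
  by apply/negbTE; apply: contraNneq hj => <-; rewrite (blk_emb hbw s0).
by rewrite mulr0n mulr0.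
Qed.

Lemma detA_ne0 s (z : R) : (char_poly (diag_block L Wd s)).[z] != 0 ->
  (forall j, blk j != s -> dd s != d j) -> \det (Amat s (f z)) != 0.
Proof.
move=> hz hd; apply/negP => /det0P [v nz hv].
have v0 : forall j, blk j != s -> v 0 j = 0.
  move=> j hj; have := congr1 (fun M : 'rV[C]_N => M 0 j) hv; rewrite !mxE (bigD1 j) //= big1 ?addr0.
  - rewrite mxE (negbTE hj) eqxx mulr1n => /eqP; rewrite mulf_eq0 => /orP [/eqP //|].
    rewrite subr_eq0 => /eqP h; have : dd s = d j.
      by rewrite -[dd s](divfK (d_neq0 j)) h mul1r.
    by move/eqP; rewrite (negbTE (hd j hj)).
  - by move=> i ne; rewrite mxE (negbTE hj) (negbTE ne) mulr0n mulr0.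
pose w : 'rV[C]_(L s) := \row_a v 0 (emb a).
have hw : w *m ((f z)%:M - map_mx f (diag_block L Wd s)) = 0.
  apply/rowP => b; have := congr1 (fun M : 'rV[C]_N => M 0 (emb b)) hv.
  rewrite (mul_supp _ _ v0) [X in _ = X -> _]mxE => h.
  rewrite [RHS]mxE -[X in _ = X]h mxE.
  apply: eq_bigr => a _; rewrite !mxE (blk_emb hbw s0) eqxx (inj_eq (@emb_inj _ _ _ hbw _)).
  by rewrite mx_natE.
have hdet : \det ((f z)%:M - map_mx f (diag_block L Wd s)) != 0.
  by rewrite -char_eval -map_char_poly horner_map /= f_eq0.
have w0 : w = 0.
  apply/eqP; apply: contraNT hdet => wn0; apply/det0P; exists w => //.
apply/negP: nz; rewrite negbK; apply/eqP/rowP => j; rewrite mxE.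
case: (eqVneq (blk j) s) => hj; last exact: v0.
have := congr1 (fun M : 'rV[C]_(L s) => M 0 (unemb s j)) w0; rewrite !mxE (unembK hbw hj). by [].
Qed.

Lemma key (s : 'I_S) (mu rho : R) : 0 < rho ->
  eigenvalue (diag_block L Wd s) mu ->
  (char_poly (diag_block L Wd s)).[mu + rho] != 0 ->
  (forall j, blk j != s -> dd s != d j) ->
  evn (fun e => exists lam, root (char_poly (Pmat L k beta Wd e)) lam /\
     nc (lam - dd s * (1 + f e * f mu)) < e * rho * nc (dd s)).
Proof.
move=> rho0 eig nroot hsep.
have dA1 := detA_eig eig.
have dA2 := detA_ne0 nroot hsep.
set A1 := Amat _ _ in dA1; set A2 := Amat _ _ in dA2.
have [K1 [K1p HK1]] := det_affine_bound A1 (Bmat s (f mu)).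
have [K2 [K2p HK2]] := det_affine_bound A2 (Bmat s (f (mu + rho))).
set a := nc (\det A2).
have a0 : 0 < a by apply: nc_gt0.
set X : R := 2 ^+ N.+1.
have X0 : 0 < X by apply: exprn_gt0.
set den := K2 + X * K1 + 1.
have den0 : 0 < den by apply: ar_den.
exists (Num.min 1 (a / den)); split; first by rewrite lt_min ltr01 divr_gt0.
move=> e e0; rewrite lt_min => /andP[e1 ea].
have ea' : e * den < a by rewrite -ltr_pdivlMr.
have e1' : e <= 1 by apply: ltW.
have /HK1 HT1 : 0 <= e <= 1 by rewrite e1' ltW.
have /HK2 HT2 : 0 <= e <= 1 by rewrite e1' ltW.
rewrite dA1 subr0 in HT1.
set T1 := \det _ in HT1; set T2 := \det (A2 + _) in HT2.
have lb : a - K2 * e <= nc T2.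
  have := nc_lb (\det A2) T2; rewrite -/a ncB => h.
  exact: ar_lb h HT2.
have hX : X * nc T1 <= X * (K1 * e) by apply: ler_wpM2l; [exact: ltW|].
have main : X * nc T1 < nc T2.
  exact: ar_main hX ea' lb e0.
have G1 : 0 < nc (\prod_i d i).
  apply: nc_gt0; rewrite prodf_seq_neq0; apply/allP => i _; exact: d_neq0.
have G2 : 0 < nc (\prod_i vrow s e 0 i).
  apply: nc_gt0; rewrite prodf_seq_neq0; apply/allP => i _; rewrite mxE.
  by case: ifP => _; rewrite ?oner_eq0 // f_eq0 gt_eqF.
apply: (root_loc (y := dd s * (1 + f e * f (mu + rho)))).
  have -> : dd s * (1 + f e * f (mu + rho)) - dd s * (1 + f e * f mu) =
            dd s * (f e * f rho) by rewrite rmorphD /=; ring.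
  rewrite !ncM !ncR !ger0_norm; [|exact: ltW|exact: ltW].
  by rewrite mulrC.
rewrite size_char_poly (p_eval s e (f mu)) (p_eval s e (f (mu + rho))) !ncM.
exact: ar_fin main (mulr_gt0 G1 G2).
Qed.

Lemma real_roots_in (s : 'I_S) (evs : seq R) :
  size evs = L s -> uniq evs -> all (eigenvalue (diag_block L Wd s)) evs ->
  forall x, root (char_poly (diag_block L Wd s)) x -> x \in evs.
Proof.
move=> sz un al x rx; apply/negPn/negP => xn.
have pn0 : char_poly (diag_block L Wd s) != 0 by rewrite monic_neq0 ?char_poly_monic.
have al' : all (root (char_poly (diag_block L Wd s))) (x :: evs).
  rewrite /= rx /=; apply/allP => y /(allP al); by rewrite eigenvalue_root_char.
have un' : uniq (x :: evs) by rewrite /= xn un.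
by have := max_poly_roots pn0 al' un'; rewrite size_char_poly /= sz ltnn.
Qed.

Lemma rho_exists (s : 'I_S) (evs : seq R) :
  size evs = L s -> uniq evs -> all (eigenvalue (diag_block L Wd s)) evs ->
  exists rho : R, 0 < rho /\
    (forall mu mu', mu \in evs -> mu' \in evs -> mu != mu' -> 2 * rho < `|mu - mu'|) /\
    (forall mu, mu \in evs -> (char_poly (diag_block L Wd s)).[mu + rho] != 0).
Proof.
move=> sz un al.
have : evn (fun r : R => forall mu, mu \in evs -> forall mu', mu' \in evs ->
           mu != mu' -> 2 * r < `|mu - mu'|).
  apply: evn_seq => mu _; apply: evn_seq => mu' _.
  have [<-|ne] := eqVneq mu mu'; first by exists 1; split => // e _ _; rewrite eqxx.
  exists (`|mu - mu'| / 2); split; first by rewrite divr_gt0 // normr_gt0 subr_eq0.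
  by move=> e e0 eg _; rewrite -ltr_pdivlMl // mulrC.
case=> g [g0 Hg]; exists (g / 2).
have g20 : 0 < g / 2 by rewrite divr_gt0.
have lt2 : g / 2 < g by lra.
have {}Hg2 := Hg (g / 2) g20 lt2.
split => //; split; first by move=> mu mu' a b; apply: Hg2.
move=> mu mu_in; apply/negP => rt.
have hin := real_roots_in sz un al rt.
have ne : mu + g / 2 != mu by rewrite -subr_eq0 addrC addKr gt_eqF.
have := Hg2 _ hin _ mu_in ne; rewrite addrC addKr ger0_norm ?ltW //; lra.
Qed.

Lemma cross_sep (s s' : 'I_S) (mu mu' rs rs' : R) : dd s != dd s' ->
  evn (fun e => e * rs * nc (dd s) + e * rs' * nc (dd s') <=
      nc (dd s * (1 + f e * f mu) - dd s' * (1 + f e * f mu'))).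
Proof.
move=> hne.
set D0 := nc (dd s - dd s').
have D00 : 0 < D0 by apply: nc_gt0; rewrite subr_eq0.
set K := nc (dd s * f mu - dd s' * f mu').
set aa := rs * nc (dd s) + rs' * nc (dd s').
have K0 : 0 <= K by exact: nc_ge0.
exists (D0 / (`|aa| + K + 1)); split.
  by rewrite divr_gt0 // ltr_pwDr // addr_ge0.
move=> e e0; rewrite ltr_pdivlMr ?ltr_pwDr ?addr_ge0 // => he.
have -> : dd s * (1 + f e * f mu) - dd s' * (1 + f e * f mu') =
          (dd s - dd s') - - (f e * (dd s * f mu - dd s' * f mu')) by ring.
apply: le_trans (nc_lb _ _); rewrite ncN ncM ncR ger0_norm ?ltW // -/D0 -/K.
have : aa <= `|aa| by exact: ler_norm.
rewrite /aa => h; nra.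
Qed.

Lemma main_nonzero : k != 0 -> Gamma_set beta -> admissible L Wd ->
  exists gamma : R, 0 < gamma /\ forall eps : R, 0 < eps -> eps < gamma ->
    has_n_distinct_eigenvalues (Pmat L k beta Wd eps).
Proof.
move=> hk hG [_ _ _ _ hblk].
have hdd : forall s s', s != s' -> dd s != dd s' by move=> s s' ne; exact: hG.
have hsep : forall s j, blk j != s -> dd s != d j by move=> s j ne; apply: hdd; rewrite eq_sym.
have ens : forall s : 'I_S, s \in enum 'I_S by move=> s; rewrite mem_enum.
case: (boolp.choice hblk) => evs Hevs.
have : forall s, exists r : R, 0 < r /\
    (forall mu mu', mu \in evs s -> mu' \in evs s -> mu != mu' -> 2 * r < `|mu - mu'|) /\
    (forall mu, mu \in evs s -> (char_poly (diag_block L Wd s)).[mu + r] != 0).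
  by move=> s; case: (Hevs s) => a b c; exact: rho_exists.
case/boolp.choice => rho Hrho.
have E1 : evn (fun e => forall s, s \in enum 'I_S -> forall mu, mu \in evs s ->
    exists lam, root (char_poly (Pmat L k beta Wd e)) lam /\
     nc (lam - dd s * (1 + f e * f mu)) < e * rho s * nc (dd s)).
  apply: evn_seq => s _; apply: evn_seq => mu mu_in.
  case: (Hrho s) => r0 [_ Hr]; case: (Hevs s) => _ _ al.
  apply: key => //; [exact: (allP al) | exact: Hr | exact: hsep].
have E2 : evn (fun e => forall s, s \in enum 'I_S -> forall s', s' \in enum 'I_S ->
    forall mu, mu \in evs s -> forall mu', mu' \in evs s' -> s != s' ->
    e * rho s * nc (dd s) + e * rho s' * nc (dd s') <=
      nc (dd s * (1 + f e * f mu) - dd s' * (1 + f e * f mu'))).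
  apply: evn_seq => s _; apply: evn_seq => s' _; apply: evn_seq => mu _; apply: evn_seq => mu' _.
  have [<-|ne] := eqVneq s s'; first by exists 1; split => // e _ _; rewrite eqxx.
  apply: evn_mono (cross_sep mu mu' (rho s) (rho s') (hdd _ _ ne)) => e h _; exact: h.
case: (evn_and E1 E2) => g [g0 Hg]; exists g; split => // e e0 eg.
case: (Hg e e0 eg) => H1 H2.
have : forall p : 'I_S * R, exists lam : C, p.2 \in evs p.1 ->
    root (char_poly (Pmat L k beta Wd e)) lam /\
    nc (lam - dd p.1 * (1 + f e * f p.2)) < e * rho p.1 * nc (dd p.1).
  move=> [s mu] /=; case: (boolP (mu \in evs s)) => h; last by exists 0.
  have [lam Hl] := H1 s (ens s) mu h; exists lam => _; exact: Hl.
case/boolp.choice => lamf Hlam.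
pose pairs := [seq (s, mu) | s <- enum 'I_S, mu <- evs s].
have pin : forall p, p \in pairs -> p.2 \in evs p.1.
  by move=> p /allpairsPdep [s [mu [_ mu_in ->]]].
exists (map lamf pairs); split.
- rewrite size_map size_allpairs_dep.
  transitivity (\sum_(s < S) L s)%N; last by case: hbw.
  rewrite sumnE big_map big_enum /=; apply: eq_bigr => s _; by case: (Hevs s).
- rewrite map_inj_in_uniq.
  + apply: allpairs_uniq_dep; [exact: enum_uniq | by move=> s _; case: (Hevs s) | ].
    by move=> [x1 y1] [x2 y2] _ _ /= [-> ->].
  + move=> [s mu] [s' mu'] /pin /= h1 /pin /= h2 eql.
    have [l1 n1] := Hlam (s, mu) h1; have [l2 n2] := Hlam (s', mu') h2.
    rewrite /= eql in n1.
    move: n1 n2; set lam := lamf (s', mu') => n1 n2.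
    set c1 := dd s * _ in n1; set c2 := dd s' * _ in n2.
    have tri := nc_tri c1 lam c2.
    rewrite ncB in n1.
    have nd := nc_gt0 (dd_neq0 s).
    have [ess|nes] := eqVneq s s'.
      subst s'; have [<-|nemu] := eqVneq mu mu' => //; exfalso.
      case: (Hrho s) => r0 [Hr _]; have := Hr mu mu' h1 h2 nemu => hr.
      have : c1 - c2 = dd s * (f e * f (mu - mu')) by rewrite /c1 /c2 rmorphB /=; ring.
      move=> E; rewrite E !ncM ncR ncR (ger0_norm (ltW e0)) in tri.
      exact: ar_same tri n1 n2 hr e0 nd.
    exfalso; have := H2 s (ens s) s' (ens s') mu h1 mu' h2 nes; rewrite -/c1 -/c2 => h.
    exact: ar_cross tri n1 n2 h.
- apply/allP => x /mapP [p /pin pp ->]; rewrite eigenvalue_root_char; exact: (Hlam p pp).1.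
Qed.

Lemma phase0 (b : R) : phase 0 b = 1.
Proof. by rewrite /phase mulr0z mulr0 mul0r cos0 sin0 oppr0. Qed.

Lemma main_zero : k = 0 -> admissible L Wd -> forall e : R, 0 < e ->
  has_n_distinct_eigenvalues (Pmat L k beta Wd e).
Proof.
move=> hk0 [_ _ _ [evW [sz un al]] _] e e0.
have PE : Pmat L k beta Wd e = map_mx f (1%:M + e *: Wd).
  apply/matrixP => i j; rewrite Pmat_entry /d /dd hk0 phase0 mul1r !mxE.
  by rewrite rmorphD rmorphM /= rmorphMn rmorph1.
exists (map (fun mu => f (1 + e * mu)) evW); split.
- by rewrite size_map.
- rewrite map_inj_uniq // => x y /fmorph_inj /addrI /mulfI; apply.
  exact: lt0r_neq0.
- apply/allP => x /mapP [mu mu_in ->]; rewrite PE.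
  have /eigenvalueP [u Hu nz] := allP al mu mu_in.
  apply/eigenvalueP; exists (map_mx f u); last by rewrite map_mx_eq0.
  rewrite -map_mxM mulmxDr mulmx1 -scalemxAr Hu -map_mxZ; congr map_mx.
  by rewrite scalerA scalerDl scale1r.
Qed.
End Mat.

Unset Implicit Arguments. Set Strict Implicit.

Theorem theorem3p3 (R : realType) (N S : nat) (L : 'I_S -> nat)
  (Wd : 'M[R]_N) (beta : 'I_S -> R) (k : int) :
  (1 <= N)%N -> (1 <= S <= N)%N ->
  bandwidth_vector N L ->
  admissible L Wd ->
  Gamma_set beta ->
  exists gamma : R, 0 < gamma /\
    forall eps : R, 0 < eps -> eps < gamma ->
      has_n_distinct_eigenvalues (Pmat L k beta Wd eps).
Proof.
move=> hN /andP[hS _] hbw hadm hG.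
pose s0 : 'I_S := Ordinal hS.
have [hk|hk] := eqVneq k 0.
  exists 1; split => // e e0 _; exact: (@main_zero R N S L Wd beta k hbw s0 hk hadm e e0).
exact: (@main_nonzero R N S L Wd beta k hbw s0 hk hG hadm).
Qed.
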